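(* Let $i$ be a positive integer. The number of points $P\in\mathcal X_3(\overline{\mathbb F}_{q^2})\setminus\mathcal O$ such that $\alpha(P)$ has $\mathcal P$-order $i$ equals $(q+1)^2\varphi(i+1)$ if $\gcd(i+1,p)=1$, and $0$ otherwise. Moreover, a point $P\in\mathcal X_3(\overline{\mathbb F}_{q^2})\setminus\mathcal O$ is $\mathbb F_{q^2}$-rational if and only if $\alpha(P)^2-\alpha(P)+1=0$ or the $\mathcal P$-order $i$ of $\alpha(P)$ satisfies that $i+1$ divides $m$.
   Context: $\varphi$ is Euler's totient function. Let $q$ be a prime power with $q\equiv2\pmod3$, $p$ its characteristic, $m=(q+1)/3$, and let $\mathcal X_3$ be the nonsingular projective model (defined over $\mathbb F_{q^2}$) of the plane curve $y^{q+1}+x^{2m}+x^m=0$. Let $\mathcal O_0$ be the $m$ points centered at the singular point $(0,0)$ and $\mathcal O_\infty$ the $m$ points over the point at infinity; other points have affine coordinates $(a,b)$, $a\ne0$, and are denoted $P_{(a,b)}$. Let $\mathcal O_m=\{P_{(a,0)}:a^m+1=0\}$, $\mathcal O=\mathcal O_0\cup\mathcal O_\infty\cup\mathcal O_m$, and for $P=P_{(a,b)}\notin\mathcal O$, $\alpha(P)=a^m/(1+a^m)$. Fix a primitive cube root of unity $\zeta_3\in\mathbb F_{q^2}$, let $\mathcal P_i(s)=\frac{(s+\zeta_3)^{3i}-(s+\zeta_3^2)^{3i}}{3(\zeta_3-\zeta_3^2)s(s-1)}$, and for $\alpha\in\overline{\mathbb F}_{q^2}\setminus\{0,1,-\zeta_3,-\zeta_3^2\}$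 let the $\mathcal P$-order of $\alpha$ be the smallest positive integer $i$ with $\mathcal P_{i+1}(\alpha)=0$. *)

(* Defs.v *)
From mathcomp Require Import all_boot all_algebra.
Set Implicit Arguments. Unset Strict Implicit. Unset Printing Implicit Defensive.
Import GRing.Theory.
Local Open Scope ring_scope.

Definition mq (q : nat) : nat := (q.+1 %/ 3)%N.

Definition Pcal (K : fieldType) (z : K) (i : nat) (s : K) : K :=
  ((s + z) ^+ (3 * i) - (s + z ^+ 2) ^+ (3 * i)) /
  (3%:R * (z - z ^+ 2) * s * (s - 1)).

Definition Porder (K : fieldType) (z : K) (al : K) (i : nat) : Prop :=
  [/\ al != 0, al != 1, al != - z & al != - z ^+ 2] /\
  (0 < i)%N /\ Pcal z i.+1 al = 0 /\
  (forall j : nat, (0 < j < i)%N -> Pcal z j.+1 al != 0).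

Definition onX3 (K : fieldType) (q : nat) (P : K * K) : Prop :=
  P.1 != 0 /\ P.2 ^+ q.+1 + P.1 ^+ (2 * mq q) + P.1 ^+ mq q = 0.

(* P in X_3 \ O : affine points with a <> 0, not in O_m *)
Definition inX3minusO (K : fieldType) (q : nat) (P : K * K) : Prop :=
  onX3 q P /\ P.1 ^+ mq q + 1 != 0.

Definition alpha (K : fieldType) (q : nat) (P : K * K) : K :=
  P.1 ^+ mq q / (1 + P.1 ^+ mq q).

Definition rationalq2 (K : fieldType) (q : nat) (P : K * K) : Prop :=
  P.1 ^+ (q ^ 2) = P.1 /\ P.2 ^+ (q ^ 2) = P.2.

(* Main.v *)
Require Import Defs.
From mathcomp Require Import all_boot all_algebra.
From mathcomp Require Import all_field all_solvable.
From mathcomp Require Import ring zify.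
Import GRing.Theory.
Local Open Scope ring_scope.
Set Implicit Arguments. Unset Strict Implicit. Unset Printing Implicit Defensive.

Lemma prim_root_ex (K : closedFieldType) n : n%:R != 0 :> K -> exists w : K, n.-primitive_root w.
Proof.
move=> nz.
have n_gt0 : (0 < n)%N by case: n nz => //; rewrite eqxx.
pose p : {poly K} := 'X^n - 1; have [r Dp] := closed_field_poly_normal p.
rewrite (monicP _) ?monicXnsubC // scale1r in Dp.
have rn1: all n.-unity_root r by apply/allP=> z; rewrite -root_prod_XsubC -Dp.
have sz_r: (n < (size r).+1)%N.
  by rewrite -(size_prod_XsubC r id) -Dp size_XnsubC.
have [|z] := hasP (has_prim_root n_gt0 rn1 _ sz_r); last by exists z.
by rewrite -separable_prod_XsubC -Dp separable_Xn_sub_1.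
Qed.

Lemma nroots (K : closedFieldType) N (c : K) : N%:R != 0 :> K -> c != 0 ->
  exists rs : seq K, [/\ uniq rs, size rs = N & forall x, x \in rs <-> x ^+ N = c].
Proof.
move=> nz cnz.
have N_gt0 : (0 < N)%N by case: N nz => //; rewrite eqxx.
have [w pw] := prim_root_ex nz.
have [r0 r0r] : exists r0, root ('X^N - c%:P) r0.
  by apply/closed_rootP; rewrite size_XnsubC // eqSS -lt0n.
have r0N : r0 ^+ N = c by apply/eqP; move: r0r; rewrite rootE !hornerE subr_eq0.
have r0nz : r0 != 0 by apply: contraNneq cnz => r00; rewrite -r0N r00 expr0n eqn0Ngt N_gt0.
exists [seq r0 * w ^+ k | k <- iota 0 N]; split.
- rewrite map_inj_in_uniq ?iota_uniq // => i j; rewrite !mem_iota !add0n => /andP[_ ltin] /andP[_ ltjn].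
  move/(mulfI r0nz)/eqP; rewrite (eq_prim_root_expr pw) !modn_small // => /eqP //.
- by rewrite size_map size_iota.
move=> x; split.
- by case/mapP => k _ ->; rewrite exprMn exprAC (prim_expr_order pw) expr1n mulr1.
move=> xN; have : (x / r0) ^+ N = 1 by rewrite exprMn exprVn xN r0N mulfV.
case/(prim_rootP pw) => k hk; apply/mapP; exists (val k).
  by rewrite mem_iota add0n ltn_ord.
by rewrite -hk mulrC divfK.
Qed.

Lemma prims (K : closedFieldType) n : n%:R != 0 :> K ->
  exists rs : seq K, [/\ uniq rs, size rs = totient n & forall x, x \in rs <-> n.-primitive_root x].
Proof.
move=> nz.
have [w pw] := prim_root_ex nz.
have n_gt0 := prim_order_gt0 pw.
exists [seq w ^+ k | k <- iota 0 n & coprime k n]; split.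
- rewrite map_inj_in_uniq ?filter_uniq ?iota_uniq // => i j.
  rewrite !mem_filter !mem_iota !add0n => /andP[_ ltin] /andP[_ ltjn].
  move/eqP; rewrite (eq_prim_root_expr pw) !modn_small // => /eqP //.
- rewrite size_map size_filter totient_count_coprime -sum1_count big_mkcond /index_iota subn0.
  by apply: eq_bigr => i _; rewrite coprime_sym; case: coprime.
move=> x; split.
- by case/mapP => k; rewrite mem_filter => /andP[ck _] ->; rewrite prim_root_exp_coprime.
move=> px; have := prim_expr_order px; case/(prim_rootP pw) => k hk.
apply/mapP; exists (val k) => //.
rewrite mem_filter mem_iota add0n ltn_ord andbT -(prim_root_exp_coprime _ pw) -hk.
by rewrite px.
Qed.

Lemma fibers (X Y : eqType) (s : seq X) (R : X -> Y -> Prop) (g : Y -> X) (N : nat) :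
  uniq s -> (forall x, x \in s -> exists sx : seq Y,
     [/\ uniq sx, size sx = N & forall y, y \in sx <-> R x y]) ->
  (forall x y, x \in s -> R x y -> g y = x) ->
  exists t : seq Y, [/\ uniq t, size t = (N * size s)%N &
     forall y, y \in t <-> exists2 x, x \in s & R x y].
Proof.
elim: s => [|x s IH] /=.
  move=> _ _ _; exists [::]; split => //; first by rewrite muln0.
  by move=> y; split => //; case.
case/andP => xs us hs gR.
have [t [ut st mt]] := IH us (fun x' hx' => hs x' (@mem_behead _ (x :: s) _ hx'))
  (fun x' y hx' => gR x' y (@mem_behead _ (x :: s) _ hx')).
have [sx [usx ssx msx]] := hs x (mem_head _ _).
exists (sx ++ t); split.
- rewrite cat_uniq usx ut andbT /=; apply/hasPn => y /mt [x' x's Rx'y].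
  apply/negP => /msx Rxy; move: xs; rewrite -(gR _ _ (mem_head _ _) Rxy).
  by rewrite (gR _ _ (@mem_behead _ (x :: s) _ x's) Rx'y) x's.
- by rewrite size_cat ssx st mulnS.
move=> y; rewrite mem_cat; split.
- case/orP => [/msx Rxy | /mt [x' x's Rx'y]]; first by exists x; rewrite ?mem_head.
  by exists x' => //; rewrite in_cons x's orbT.
case=> x'; rewrite in_cons => /orP [/eqP -> Rxy | x's Rx'y].
  by rewrite (proj2 (msx y) Rxy).
by apply/orP; right; apply/mt; exists x'.
Qed.

Lemma zfacts (K : fieldType) (z : K) : 3.-primitive_root z ->
  [/\ z ^+ 3 = 1, z != 1, z ^+ 2 + z + 1 = 0, z != 0 & z ^+ 2 != 1].
Proof.
move=> pz.
have z3 : z ^+ 3 = 1 := prim_expr_order pz.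
have z1 : z != 1.
  apply/eqP => e; have := prim_order_dvd pz 1; rewrite e expr1 eqxx /=; done.
have z21 : z ^+ 2 != 1.
  apply/eqP => e; have := prim_order_dvd pz 2; rewrite e eqxx /=; done.
have zz : z ^+ 2 + z + 1 = 0.
  have e : (z - 1) * (z ^+ 2 + z + 1) = z ^+ 3 - 1 by ring.
  move: e; rewrite z3 subrr => e; move: e.
  by move/eqP; rewrite mulf_eq0 subr_eq0 (negbTE z1) /= => /eqP.
split => //; apply/eqP => z0; move: z3; rewrite z0 expr0n /= => /eqP; rewrite eq_sym oner_eq0.
by [].
Qed.

Lemma zrel (K : fieldType) (z : K): z^+2 + z + 1 = 0 -> 1 + z = - z^+2 /\ 1 + z^+2 = -z.
Proof.
move=> zz; split; apply/eqP; rewrite -subr_eq0.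
  have -> : 1 + z - - z^+2 = z^+2 + z + 1 by ring.
  by rewrite zz.
have -> : 1 + z^+2 - - z = z^+2 + z + 1 by ring.
by rewrite zz.
Qed.

Definition tt (K : fieldType) (z al : K) := (al + z) / (al + z ^+ 2).

Lemma Pcal0 (K : fieldType) (z al : K) j : 3.-primitive_root z -> 3%:R != 0 :> K ->
  al != 0 -> al != 1 -> al != - z ^+ 2 ->
  (Pcal z j al == 0) = (tt z al ^+ 3 ^+ j == 1).
Proof.
move=> pz h3 a0 a1 az2; have [z3 z1 zz z0 z21] := zfacts pz.
have zz2 : z - z ^+ 2 != 0.
  rewrite subr_eq0; apply: contra z1 => /eqP e; apply/eqP.
  by apply: (mulfI z0); rewrite mulr1 -expr2 -e.
have B0 : al + z ^+ 2 != 0 by rewrite addr_eq0.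
rewrite /Pcal mulf_eq0 invr_eq0 !mulf_eq0 (negbTE h3) (negbTE zz2) (negbTE a0) /=.
rewrite (subr_eq0 al 1) (negbTE a1) orbF.
rewrite /tt -exprM exprMn exprVn subr_eq0.
by apply/eqP/eqP => [-> | e]; [rewrite mulfV // expf_neq0 | rewrite -(divfK (expf_neq0 (3 * j) B0) ((al + z) ^+ (3 * j))) e mul1r].
Qed.

Lemma tt3 (K : fieldType) (z al : K) : 3.-primitive_root z -> al != - z ^+ 2 ->
  (tt z al ^+ 3 == 1) = (al == 0) || (al == 1).
Proof.
move=> pz az2; have [z3 z1 zz z0 z21] := zfacts pz.
have B0 : al + z ^+ 2 != 0 by rewrite addr_eq0.
apply/idP/idP.
- move/eqP/(prim_rootP pz) => [[k /= hk]] e.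
  move: e; rewrite /tt => /eqP; rewrite (can2_eq (divfK B0) (mulfK B0)) => /eqP e.
  case: k hk e => [|[|[|//]]] _ /=; rewrite ?expr0 ?expr1 ?mul1r.
  + move/addrI => e; have : z * 1 = z * z by rewrite mulr1 -expr2 -e.
    by move/(mulfI z0) => ez; rewrite ez eqxx in z1.
  + move=> e; apply/orP; right; apply/eqP.
    have : (al - 1) * (1 - z) = 0.
      have -> : (al - 1) * (1 - z) = (al + z) - z * (al + z ^+ 2) + (z ^+ 3 - 1) by ring.
      by rewrite e z3 !subrr addr0.
    move/eqP; rewrite mulf_eq0 subr_eq0 => /orP [/eqP //|]; by rewrite subr_eq0 eq_sym (negbTE z1).
  + move=> e; apply/orP; left; apply/eqP.
    have : al * (1 - z ^+ 2) = 0.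
      have -> : al * (1 - z ^+ 2) = (al + z) - z ^+ 2 * (al + z ^+ 2) + z * (z ^+ 3 - 1) by ring.
      by rewrite e z3 !subrr mulr0 addr0.
    move/eqP; rewrite mulf_eq0 => /orP [/eqP //|]; by rewrite subr_eq0 eq_sym (negbTE z21).
- case/orP => /eqP ->; rewrite /tt.
    by rewrite !add0r expr_div_n z3 exprAC z3 expr1n divr1 eqxx.
  have [e1 e2] := zrel zz.
  by rewrite [1 + z]e1 e2 (divrNN (z ^+ 2) z) expr2 (mulfK z0) z3 eqxx.
Qed.

Lemma porder_iff (K : fieldType) (z al : K) (i : nat) : 3.-primitive_root z -> 3%:R != 0 :> K ->
  al != - z ^+ 2 ->
  Porder z al i <-> [/\ al != - z, (0 < i)%N & i.+1.-primitive_root (tt z al ^+ 3)].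
Proof.
move=> pz h3 az2; set x := tt z al ^+ 3.
split.
- case=> [[a0 a1 az _]] [i0 [Pi Pj]]; split => //.
  have x1 : x != 1 by rewrite /x tt3 // negb_or a0 a1.
  have xi : x ^+ i.+1 = 1 by apply/eqP; rewrite /x -Pcal0 // Pi.
  have [d pd dd] := prim_order_exists (ltn0Sn i) xi.
  have d0 := prim_order_gt0 pd.
  have xd : x ^+ d = 1 := prim_expr_order pd.
  case: (ltnP d i.+1) => hd; last first.
    have e : d = i.+1 by apply/eqP; rewrite eqn_leq hd dvdn_leq.
    by rewrite -e.
  case: d hd d0 xd {pd dd} => [//|[|j]] hd _ xd; first by move: x1; rewrite -xd expr1 eqxx.
  move: hd; rewrite ltnS => hd; have := Pj j.+1 hd.
  by rewrite Pcal0 // -/x xd eqxx.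
- case=> az i0 px.
  have x1 : x != 1.
    have i1 : (i.+1 != 1)%N by rewrite eqSS -lt0n.
    by apply/eqP => e; have := prim_order_dvd px 1; rewrite expr1 e eqxx dvdn1 (negbTE i1).
  move: x1; rewrite /x tt3 // negb_or => /andP [a0 a1].
  split => //; split => //; split.
    by apply/eqP; rewrite Pcal0 // -/x prim_expr_order.
  move=> j /andP [j0 ji]; rewrite Pcal0 // -/x -(prim_order_dvd px).
  by apply/negP => /dvdn_leq => /(_ isT); rewrite ltnS leqNgt ji.
Qed.

Definition TT (K : fieldType) (z u : K) := (1 - z * u) / (z - u).

Lemma ttT (K : fieldType) (z u : K) : z ^+ 3 = 1 -> z ^+ 2 + z + 1 = 0 -> z != 0 ->
  u != -1 -> u != z -> tt z (u / (1 + u)) = TT z u.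
Proof.
move=> z3 zz z0 um1 uz.
have u1 : 1 + u != 0 by rewrite addrC addr_eq0.
have zu : z - u != 0 by rewrite subr_eq0 eq_sym.
have d2 : u + z ^+ 2 * (1 + u) != 0.
  have -> : u + z ^+ 2 * (1 + u) = z * (z - u) + u * (z ^+ 2 + z + 1) by ring.
  by rewrite zz mulr0 addr0 mulf_neq0.
transitivity ((u + z * (1 + u)) / (u + z ^+ 2 * (1 + u))).
  by rewrite /tt; field; rewrite d2 u1.
apply/eqP; rewrite /TT eqr_div // -subr_eq0; apply/eqP.
have -> : (u + z * (1 + u)) * (z - u) - (1 - z * u) * (u + z ^+ 2 * (1 + u)) =
  (z ^+ 3 - 1) * (u + u ^+ 2) by ring.
by rewrite z3 subrr mul0r.
Qed.

Lemma TTinv (K : fieldType) (z t : K) : z ^+ 2 != 1 -> t != z -> TT z (TT z t) = t.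
Proof.
move=> z21 tz; have zt : z - t != 0 by rewrite subr_eq0 eq_sym.
have h : z * (z - t) - (1 - z * t) != 0.
  have -> : z * (z - t) - (1 - z * t) = z ^+ 2 - 1 by ring.
  by rewrite subr_eq0.
by rewrite /TT; field; rewrite zt /=.
Qed.

Lemma TTprops (K : fieldType) (z t : K) : z ^+ 3 = 1 -> z ^+ 2 + z + 1 = 0 -> z != 0 -> z ^+ 2 != 1 ->
  t != 0 -> t ^+ 3 != 1 ->
  [/\ t != z, TT z t != 0, TT z t != -1, TT z t != z & TT z t != z ^+ 2].
Proof.
move=> z3 zz z0 z21 t0 t31.
have tz : t != z by apply: contra t31 => /eqP ->; rewrite z3.
have zt : z - t != 0 by rewrite subr_eq0 eq_sym.
have tz2 : t != z ^+ 2 by apply: contra t31 => /eqP ->; rewrite exprAC z3 expr1n.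
have t1 : t != 1 by apply: contra t31 => /eqP ->; rewrite expr1n.
split => //; rewrite /TT.
- rewrite mulf_neq0 ?invr_eq0 // subr_eq0; apply: contra tz2 => /eqP e.
  have -> : t = z ^+ 3 * t by rewrite z3 mul1r.
  by rewrite exprSr -mulrA -e mulr1.
- rewrite (can2_eq (divfK zt) (mulfK zt)); apply: contra t1 => /eqP e.
  have : (1 + z) * (1 - t) = 0.
    have -> : (1 + z) * (1 - t) = (1 - z * t) - -1 * (z - t) by ring.
    by rewrite e subrr.
  have [e1 _] := zrel zz.
  by move/eqP; rewrite mulf_eq0 [1 + z]e1 oppr_eq0 expf_eq0 (negbTE z0) andbF /= subr_eq0 eq_sym.
- rewrite (can2_eq (divfK zt) (mulfK zt)); apply: contra z21 => /eqP e.
  have -> : z ^+ 2 = z * (z - t) + z * t by ring.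
  by rewrite -e subrK eqxx.
- rewrite (can2_eq (divfK zt) (mulfK zt)); apply: contra t0 => /eqP e.
  have : t * (z ^+ 2 - z) = 0.
    have -> : t * (z ^+ 2 - z) = (1 - z * t) - z ^+ 2 * (z - t) + (z ^+ 3 - 1) by ring.
    by rewrite e subrr z3 subrr addr0.
  move/eqP; rewrite mulf_eq0 subr_eq0 => /orP [//|/eqP e2].
  have z1 : z = 1 by apply: (mulfI z0); rewrite mulr1 -expr2 e2.
  by move: z21; rewrite e2 z1 eqxx.
Qed.

Lemma alz (K : fieldType) (z u : K) : z ^+ 3 = 1 -> z ^+ 2 + z + 1 = 0 -> z != 0 -> u != -1 ->
  (u / (1 + u) == - z ^+ 2) = (u == z) /\ (u / (1 + u) == - z) = (u == z ^+ 2).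
Proof.
move=> z3 zz z0 um1.
have u1 : 1 + u != 0 by rewrite addrC addr_eq0.
rewrite !(can2_eq (divfK u1) (mulfK u1)); split.
  rewrite -subr_eq0 mulNr opprK.
  have -> : u + z ^+ 2 * (1 + u) = z * (z - u) + u * (z ^+ 2 + z + 1) by ring.
  by rewrite zz mulr0 addr0 mulf_eq0 (negbTE z0) subr_eq0 eq_sym.
rewrite -subr_eq0 mulNr opprK.
have -> : u + z * (1 + u) = z ^+ 2 * (z ^+ 2 - u) + u * (z ^+ 2 + z + 1) - z * (z ^+ 3 - 1) by ring.
by rewrite zz z3 subrr !mulr0 addr0 subr0 mulf_eq0 expf_eq0 (negbTE z0) andbF subr_eq0 eq_sym.
Qed.

Lemma charP (K : fieldType) (z : K) q i (P : K * K) : 3.-primitive_root z -> 3%:R != 0 :> K ->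
  (0 < mq q)%N -> (0 < i)%N ->
  (inX3minusO q P /\ Porder z (alpha q P) i) <->
  exists t, [/\ i.+1.-primitive_root (t ^+ 3), P.1 ^+ mq q = TT z t &
                P.2 ^+ q.+1 = - (P.1 ^+ (2 * mq q) + P.1 ^+ mq q)].
Proof.
move=> pz h3 m0 i0; have [z3 z1 zz z0 z21] := zfacts pz.
case: P => a b /=; rewrite /inX3minusO /onX3 /alpha /=.
set u := a ^+ mq q.
split.
- case=> [[[a0 eqb] u1] po].
  have um1 : u != -1 by rewrite -addr_eq0.
  have [al1 al2] := alz z3 zz z0 um1.
  have az2 : u / (1 + u) != - z ^+ 2 by case: po => [[_ _ _ ]].
  have az : u / (1 + u) != - z by case: po => [[_ _ ]].
  have uz : u != z by rewrite -al1.
  have [_ _ pt] := (porder_iff i pz h3 az2).1 po.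
  exists (TT z u); split.
  + by rewrite -ttT.
  + by rewrite TTinv.
  + by apply/eqP; rewrite -addr_eq0 addrA eqb eqxx.
- case=> t [pt ue eqb].
  have t0 : t != 0.
    by apply/eqP => e; move: (prim_expr_order pt); rewrite e !expr0n /= => /eqP; rewrite eq_sym oner_eq0.
  have t31 : t ^+ 3 != 1.
    apply/eqP => e; have := prim_order_dvd pt 1; rewrite expr1 e eqxx dvdn1 => /eqP [] e2.
    by rewrite e2 in i0.
  have [tz T0 Tm1 Tz Tz2] := TTprops z3 zz z0 z21 t0 t31.
  have um1 : u != -1 by rewrite ue.
  have [al1 al2] := alz z3 zz z0 um1.
  have a0 : a != 0.
    by apply: contra T0 => /eqP a0; rewrite -ue /u a0 expr0n eqn0Ngt m0.
  split; first split; first split.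
  + exact: a0.
  + by rewrite eqb -addrA addNr.
  + by rewrite addr_eq0.
  apply/(porder_iff i pz h3); first by rewrite al1 ue.
  split; first by rewrite al2 ue.
  + exact: i0.
  + by rewrite ttT // ue ?TTinv.
Qed.

Lemma frobp_inj (K : fieldType) (p : nat) (y : K) : p \in [pchar K] -> y ^+ p = 1 -> y = 1.
Proof.
move=> pK yp; have pp : [pchar K].-nat p by rewrite pnatE ?(pcharf_prime pK).
have : (y - 1) ^+ p = 0 by rewrite exprDn_pchar // exprNn_pchar // expr1n yp subrr.
by move/eqP; rewrite expf_eq0 subr_eq0 => /andP [_ /eqP].
Qed.

Lemma nocount (K : fieldType) (p n : nat) (x : K) : p \in [pchar K] -> (p %| n)%N ->
  ~ n.-primitive_root x.
Proof.
move=> pK /dvdnP [n' ->] px.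
have pp := pcharf_prime pK.
have n0 := prim_order_gt0 px.
have n'0 : (0 < n')%N by move: n0; rewrite muln_gt0 => /andP [].
have : (x ^+ n') ^+ p = 1 by rewrite -exprM prim_expr_order.
move/(frobp_inj pK)/eqP; rewrite -(prim_order_dvd px) => /(dvdn_leq n'0).
by rewrite leqNgt ltn_Pmulr ?prime_gt1.
Qed.

Lemma pair_roots (K : closedFieldType) N (a c : K) : N%:R != 0 :> K -> c != 0 ->
  exists sx : seq (K * K), [/\ uniq sx, size sx = N &
    forall P, P \in sx <-> P.1 = a /\ P.2 ^+ N = c].
Proof.
move=> hN c0; have [bs [ub sb mb]] := nroots hN c0.
exists [seq (a, b) | b <- bs]; split.
- by rewrite map_inj_uniq // => x y [].
- by rewrite size_map.
case=> a' b /=; split.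
  by case/mapP => b' hb [-> ->]; split => //; apply/mb.
by case=> -> /mb hb; apply/mapP; exists b.
Qed.

Lemma part1 (K : closedFieldType) (z : K) (q i p : nat) : p \in [pchar K] ->
  3.-primitive_root z -> 3%:R != 0 :> K -> (3 * mq q = q.+1)%N ->
  (mq q)%:R != 0 :> K -> (q.+1)%:R != 0 :> K -> (0 < i)%N ->
  exists s : seq (K * K), uniq s /\
    (forall P, P \in s <-> inX3minusO q P /\ Porder z (alpha q P) i) /\
    size s = (if coprime i.+1 p then q.+1 ^ 2 * totient i.+1 else 0)%N.
Proof.
move=> pK pz h3 h3m hm hq i0.
have [z3 z1 zz z0 z21] := zfacts pz.
have m0 : (0 < mq q)%N by rewrite lt0n; apply: contra hm => /eqP ->.
case: ifP => cop; last first.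
  exists [::]; split => //; split => // P; split => // /(charP _ pz h3 m0 i0) [t [pt _ _]].
  have pp := pcharf_prime pK.
  by case: (nocount pK _ pt); move: cop; rewrite coprime_sym prime_coprime // => /negbFE.
have hn : (i.+1)%:R != 0 :> K.
  by rewrite -(dvdn_pcharf pK) -prime_coprime ?(pcharf_prime pK) // coprime_sym.
have [W [uW sW mW]] := prims hn.
have W0 : forall w, w \in W -> w != 0.
  move=> w /mW pw; apply/eqP => e; move: (prim_expr_order pw); rewrite e expr0n /= => /eqP.
  by rewrite eq_sym oner_eq0.
have [Ts [uT sT mT]] := @fibers _ _ W (fun w t => t ^+ 3 = w) (fun t => t ^+ 3) 3 uW
  (fun w hw => nroots h3 (W0 w hw)) (fun x y _ e => e).
have mT' : forall t, t \in Ts <-> (i.+1).-primitive_root (t ^+ 3).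
  move=> t; rewrite mT; split; first by case=> w /mW pw ->.
  by move=> pt; exists (t ^+ 3) => //; apply/mW.
have Tprops : forall t, t \in Ts -> t != 0 /\ t ^+ 3 != 1.
  move=> t /mT' pt; split.
    by apply/eqP => e; move: (prim_expr_order pt); rewrite e !expr0n /= => /eqP; rewrite eq_sym oner_eq0.
  apply/eqP => e; have := prim_order_dvd pt 1; rewrite expr1 e eqxx dvdn1 => /eqP [] e2.
  by rewrite e2 in i0.
have gA : forall t a, t \in Ts -> a ^+ mq q = TT z t -> TT z (a ^+ mq q) = t.
  move=> t a /Tprops [t0 t31] ->; have [tz _ _ _ _] := TTprops z3 zz z0 z21 t0 t31.
  by rewrite TTinv.
have [As [uA sA mA]] := @fibers _ _ Ts (fun t a => a ^+ mq q = TT z t) (fun a => TT z (a ^+ mq q)) (mq q) uT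
  (fun t ht => nroots hm (let: conj t0 t31 := Tprops t ht in
                          let: And5 _ T0 _ _ _ := TTprops z3 zz z0 z21 t0 t31 in T0))
  gA.
pose cc (a : K) := - (a ^+ (2 * mq q) + a ^+ mq q).
have c0 : forall a : K, a \in As -> cc a != 0.
  move=> a /mA [t ht e]; have [t0 t31] := Tprops t ht.
  have [_ T0 Tm1 _ _] := TTprops z3 zz z0 z21 t0 t31.
  rewrite /cc oppr_eq0 mulnC exprM e.
  have -> : TT z t ^+ 2 + TT z t = TT z t * (TT z t + 1) by ring.
  by rewrite mulf_neq0 // addr_eq0.
have [S [uS sS mS]] := @fibers _ (K * K)%type As
  (fun a P => P.1 = a /\ P.2 ^+ q.+1 = cc a) (fun P => P.1) q.+1 uA
  (fun a ha => pair_roots a hq (c0 a ha)) (fun a P _ e => proj1 e).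
exists S; split => //; split.
- move=> P; rewrite mS (charP P pz h3 m0 i0); split.
    case=> a /mA [t ht e] [e1 e2]; exists t; split.
    + by apply/mT'.
    + by rewrite e1.
    + by rewrite e2 e1.
  case=> t [pt e1 e2]; exists P.1; last by split.
  by apply/mA; exists t => //; apply/mT'.
rewrite sS sA sT sW (mulnA (mq q)) (mulnC (mq q) 3) h3m mulnA.
by rewrite -mulnn.
Qed.

Lemma frobB (K : fieldType) (p k : nat) (x y : K) : p \in [pchar K] ->
  (x - y) ^+ (p ^ k) = x ^+ (p ^ k) - y ^+ (p ^ k).
Proof.
move=> pK; have pp : [pchar K].-nat (p ^ k)%N by rewrite pnatX pnatE ?(pcharf_prime pK) ?pK.
by rewrite exprDn_pchar // exprNn_pchar.
Qed.

Lemma qsplit (q : nat) : (q %% 3 = 2)%N -> q = (3 * (q %/ 3) + 2)%N.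
Proof. by move=> h; rewrite {1}(divn_eq q 3) h mulnC. Qed.

Lemma rat_u (K : fieldType) (q : nat) (a b : K) : (1 < q)%N -> (q %% 3 = 2)%N ->
  (3 * mq q = q.+1)%N -> a != 0 -> a ^+ mq q != -1 ->
  b ^+ q.+1 = - (a ^+ mq q ^+ 2 + a ^+ mq q) ->
  (forall x y : K, (x + y) ^+ q = x ^+ q + y ^+ q) ->
  (forall x : K, (- x) ^+ q = - x ^+ q) ->
  (a ^+ (q ^ 2) = a /\ b ^+ (q ^ 2) = b) <->
  (a ^+ mq q ^+ q = a ^+ mq q \/ (a ^+ mq q) ^+ 2 + a ^+ mq q + 1 = 0).
Proof.
move=> q1 q3 h3m a0 um1 eb fD fN.
set u := a ^+ mq q in um1 eb *; set r := q.-1.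
have hq : q = r.+1 by rewrite /r prednK // ltnW.
have hq2 : (q ^ 2 = 3 * mq q * r + 1)%N by rewrite h3m hq; nia.
have ea : a ^+ (q ^ 2) = u ^+ (3 * r) * a.
  by rewrite hq2 exprD expr1 (mulnC 3) -mulnA exprM.
have eb2 : b ^+ (q ^ 2) = (b ^+ q.+1) ^+ r * b.
  by rewrite hq2 -h3m exprD expr1 -exprM.
set c := - (u ^+ 2 + u) in eb *.
have c0 : c != 0.
  rewrite oppr_eq0; have -> : u ^+ 2 + u = u * (u + 1) by ring.
  by rewrite mulf_neq0 ?expf_neq0 // addr_eq0.
have u0 : u != 0 by rewrite expf_neq0.
have ecq : c ^+ q = c ^+ r * c by rewrite hq exprSr.
have cq : c ^+ q = - ((u ^+ q) ^+ 2 + u ^+ q) by rewrite fN fD -!exprM (mulnC 2 q).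
have uq : u ^+ q = u ^+ r * u by rewrite hq exprSr.
split.
- case=> ha hb.
  have u3r : u ^+ (3 * r) = 1 by apply: (mulIf a0); rewrite -ea ha mul1r.
  have b0 : b != 0 by apply: contra c0 => /eqP b0; rewrite -eb b0 expr0n.
  have cr : c ^+ r = 1 by apply: (mulIf b0); rewrite mul1r -eb -eb2 hb.
  have ccq : c ^+ q = c by rewrite ecq cr mul1r.
  have : (u ^+ q - u) * (u ^+ q + u + 1) = 0.
    have -> : (u ^+ q - u) * (u ^+ q + u + 1) = c - c ^+ q by rewrite cq /c; ring.
    by rewrite ccq subrr.
  move/eqP; rewrite mulf_eq0 => /orP [|/eqP e].
    by rewrite subr_eq0 => /eqP; left.
  set w := u ^+ r in uq.
  have w3 : w ^+ 3 = 1 by rewrite -exprM mulnC.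
  have [w1|w1] := eqVneq w 1; first by left; rewrite uq w1 mul1r.
  have ww : w ^+ 2 + w + 1 = 0.
    have : (w - 1) * (w ^+ 2 + w + 1) = 0.
      have -> : (w - 1) * (w ^+ 2 + w + 1) = w ^+ 3 - 1 by ring.
      by rewrite w3 subrr.
    by move/eqP; rewrite mulf_eq0 subr_eq0 (negbTE w1) => /eqP.
  have uw2 : u * w ^+ 2 = 1.
    have -> : u * w ^+ 2 = u * (w ^+ 2 + w + 1) - (w * u + u + 1) + 1 by ring.
    by rewrite ww -uq e mulr0 subr0 add0r.
  have uw : u = w.
    have -> : u = u * w ^+ 3 by rewrite w3 mulr1.
    by rewrite exprSr mulrA uw2 mul1r.
  by right; rewrite uw.
- have hfin : u ^+ (3 * r) = 1 -> u ^+ q = u \/ u ^+ q + u + 1 = 0 ->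
      a ^+ (q ^ 2) = a /\ b ^+ (q ^ 2) = b.
    move=> u3r hv; split; first by rewrite ea u3r mul1r.
    have ccq : c ^+ q = c.
      apply/eqP; rewrite -subr_eq0; apply/eqP.
      have -> : c ^+ q - c = - ((u ^+ q - u) * (u ^+ q + u + 1)) by rewrite cq /c; ring.
      by case: hv => ->; rewrite ?subrr ?mul0r ?mulr0 oppr0.
    have cr : c ^+ r = 1 by apply: (mulIf c0); rewrite mul1r -ecq.
    by rewrite eb2 eb cr mul1r.
  case=> [uq1|uu]; apply: hfin.
  + have ur : u ^+ r = 1 by apply: (mulIf u0); rewrite mul1r -uq.
    by rewrite mulnC exprM ur expr1n.
  + by left.
  + have u3 : u ^+ 3 = 1.
      have -> : u ^+ 3 = (u - 1) * (u ^+ 2 + u + 1) + 1 by ring.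
      by rewrite uu mulr0 add0r.
    by rewrite exprM u3 expr1n.
  right; have u3 : u ^+ 3 = 1.
    have -> : u ^+ 3 = (u - 1) * (u ^+ 2 + u + 1) + 1 by ring.
    by rewrite uu mulr0 add0r.
  rewrite (qsplit q3) exprD exprM u3 expr1n mul1r.
  by rewrite -uu; ring.
Qed.

Lemma part2 (K : fieldType) (z : K) (q : nat) (P : K * K) :
  3.-primitive_root z -> 3%:R != 0 :> K -> (1 < q)%N -> (q %% 3 = 2)%N ->
  (3 * mq q = q.+1)%N ->
  (forall x y : K, (x + y) ^+ q = x ^+ q + y ^+ q) ->
  (forall x : K, (- x) ^+ q = - x ^+ q) ->
  inX3minusO q P ->
  (rationalq2 q P <->
   (alpha q P ^+ 2 - alpha q P + 1 = 0 \/
    exists j : nat, Porder z (alpha q P) j /\ (j.+1 %| mq q)%N)).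
Proof.
move=> pz h3 q1 q3 h3m fD fN; have [z3 z1 zz z0 z21] := zfacts pz.
have m0 : (0 < mq q)%N by rewrite -(ltn_pmul2l (isT : (0 < 3)%N)) h3m.
have zq : z ^+ q = z ^+ 2 by rewrite (qsplit q3) exprD exprM z3 expr1n mul1r.
case: P => a b; rewrite /inX3minusO /onX3 /rationalq2 /alpha /= => [[[a0 eqb] u1]].
have um1 : a ^+ mq q != -1 by rewrite -addr_eq0.
have eb : b ^+ q.+1 = - (a ^+ mq q ^+ 2 + a ^+ mq q).
  by apply/eqP; rewrite -addr_eq0 -exprM mulnC addrA eqb.
rewrite (rat_u q1 q3 h3m a0 um1 eb fD fN).
set u := a ^+ mq q in um1 u1 *.
have u0 : u != 0 by rewrite expf_neq0.
have u1' : 1 + u != 0 by rewrite addrC.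
set al := u / (1 + u).
have eal : al ^+ 2 - al + 1 = (u ^+ 2 + u + 1) / (1 + u) ^+ 2 by rewrite /al; field.
have [U0|U0] := eqVneq (u ^+ 2 + u + 1) 0.
  by split => _; [left; rewrite eal U0 mul0r | right; exact U0].
have ealn : al ^+ 2 - al + 1 != 0 by rewrite eal mulf_neq0 // invr_eq0 expf_neq0.
have uz : u != z by apply: contra U0 => /eqP ->; rewrite zz.
have uz2 : u != z ^+ 2.
  apply: contra U0 => /eqP ->; rewrite -exprM (_ : (2 * 2 = 3 + 1)%N) // exprD z3 mul1r expr1.
  by rewrite (addrC z) zz eqxx.
have [al1 al2] := alz z3 zz z0 um1.
have az2 : al != - z ^+ 2 by rewrite /al al1.
have az : al != - z by rewrite /al al2.
have htt : tt z al = TT z u by rewrite /al ttT.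
have t31 : TT z u ^+ 3 != 1.
  rewrite -htt tt3 // negb_or; apply/andP; split.
    by rewrite /al mulf_neq0 // invr_eq0.
  rewrite /al (can2_eq (divfK u1') (mulfK u1')) mul1r.
  apply/eqP => e; have : (1 + u) - u = u - u by rewrite -e.
  by rewrite addrK subrr => /eqP; rewrite oner_eq0.
have zu : z - u != 0 by rewrite subr_eq0 eq_sym.
have key : (TT z u ^+ q.+1 == 1) = (u ^+ q == u).
  have zuq : z ^+ 2 - u ^+ q != 0.
    by rewrite -zq -fN -fD expf_neq0.
  have tq : TT z u ^+ q = (1 - z ^+ 2 * u ^+ q) / (z ^+ 2 - u ^+ q).
    rewrite /TT (expr_div_n (1 - z * u) (z - u) q) fD fD fN fN exprMn zq expr1n.
    done.
  rewrite exprS tq /TT mulf_div.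
  rewrite (can2_eq (divfK (mulf_neq0 zu zuq)) (mulfK (mulf_neq0 zu zuq))) mul1r.
  rewrite -subr_eq0.
  have -> : (1 - z * u) * (1 - z ^+ 2 * u ^+ q) - (z - u) * (z ^+ 2 - u ^+ q) =
     (z ^+ 2 - z) * (u - u ^+ q) + (z ^+ 3 - 1) * (u * u ^+ q - 1) by ring.
  rewrite z3 subrr mul0r addr0 mulf_eq0 subr_eq0 eq_sym subr_eq0 eq_sym.
  have zz2 : (z ^+ 2 == z) = false.
    apply/negbTE; apply: contra z1 => /eqP e; apply/eqP; apply: (mulfI z0).
    by rewrite mulr1 -expr2.
  by rewrite zz2.
split.
- case=> [uq|e]; last by rewrite e eqxx in U0.
  right.
  have tm : (TT z u ^+ 3) ^+ mq q = 1 by rewrite -exprM h3m; apply/eqP; rewrite key uq.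
  have [d pd dd] := prim_order_exists m0 tm.
  case: d pd dd => [|[|j]] pd dd.
  + by move: (prim_order_gt0 pd).
  + by move: t31; rewrite -(prim_expr_order pd) expr1 eqxx.
  exists j.+1; split => //.
  by apply/(porder_iff _ pz h3 az2); rewrite htt.
- case=> [e|[j [po dj]]]; first by move: ealn; rewrite e eqxx.
  left; apply/eqP; rewrite -key.
  have [_ _ pj] := (porder_iff _ pz h3 az2).1 po.
  rewrite htt in pj.
  by rewrite -h3m exprM -(prim_order_dvd pj).
Qed.

Theorem lemma3p8 (p k : nat) (K : closedFieldType) (z : K) (i : nat) :
  prime p -> (0 < k)%N -> ((p ^ k) %% 3 = 2)%N ->
  p \in [pchar K] ->
  (forall x : K, exists n : nat, (0 < n)%N /\ x ^+ (p ^ n) = x) ->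
  3.-primitive_root z ->
  (0 < i)%N ->
  (exists s : seq (K * K),
      uniq s /\
      (forall P : K * K,
         P \in s <-> (inX3minusO (p ^ k) P /\ Porder z (alpha (p ^ k) P) i)) /\
      size s = (if coprime i.+1 p then (p ^ k).+1 ^ 2 * totient i.+1 else 0)%N)
  /\
  (forall P : K * K, inX3minusO (p ^ k) P ->
     (rationalq2 (p ^ k) P <->
      (alpha (p ^ k) P ^+ 2 - alpha (p ^ k) P + 1 = 0 \/
       exists j : nat, Porder z (alpha (p ^ k) P) j /\ (j.+1 %| mq (p ^ k))%N))).
Proof.
move=> pp k0 q3 pK _ pz i0.
have pq : (p %| p ^ k)%N := dvdn_exp k0 (dvdnn p).
set q := (p ^ k)%N in q3 pq *.
have h3m : (3 * mq q = q.+1)%N by rewrite /mq; lia.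
have q1 : (1 < q)%N by move: q3; lia.
have p1 : p != 1%N by apply: contraTneq pp => ->.
have h3 : 3%:R != 0 :> K.
  rewrite -(dvdn_pcharf pK); apply/negP => /(prime_nt_dvdP (isT : prime 3) p1) e.
  by move: pq; rewrite e /dvdn q3.
have hq : (q.+1)%:R != 0 :> K.
  rewrite -(dvdn_pcharf pK) -addn1 dvdn_addr // dvdn1; exact: p1.
have hm : (mq q)%:R != 0 :> K.
  rewrite -(dvdn_pcharf pK); apply: contraNN (hq : ~~ (_ == _)) => hd.
  by rewrite -(dvdn_pcharf pK) -h3m dvdn_mull.
have pn : [pchar K].-nat q by rewrite /q pnatX pnatE ?pK.
have fD : forall x y : K, (x + y) ^+ q = x ^+ q + y ^+ q by move=> x y; rewrite exprDn_pchar.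
have fN : forall x : K, (- x) ^+ q = - x ^+ q by move=> x; rewrite exprNn_pchar.
split; first exact: part1 pK pz h3 h3m hm hq i0.
by move=> P hP; apply: part2 pz h3 q1 q3 h3m fD fN hP.
Qed.
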